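(* Let $A$ be a general metric space and $\mathrm{WFil}^*(A)$ the preorder of weakly flat filters on $A$ under the relation $\to$. Then: (a) every nonempty family of objects of $\mathrm{WFil}^*(A)$ has a least upper bound (colimit) in $\mathrm{WFil}^*(A)$; (b) the filters of forward Cauchy sequences are dense: every weakly flat filter $\mathcal F$ is a least upper bound in $\mathrm{WFil}^*(A)$ of the family of (filters of) forward Cauchy sequences $(x_n)$ with $(x_n)\to\mathcal F$; (c) the flat filters are exactly (up to isomorphism in $\mathrm{WFil}^*(A)$) the least upper bounds in $\mathrm{WFil}^*(A)$ of nonempty families $\mathcal S$ of (filters of) forward Cauchy sequences that are directed, i.e. for all $s,t\in\mathcal S$ there is $u\in\mathcal S$ with $s\to u$ and $t\to u$ (equivalently, colimits of functors with nonempty filtered domain taking values forward Cauchy sequences).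
   Context: A general metric space $A$ is a set with $A(-,-):A\times A\to[0,\infty]$, $A(x,x)=0$, $A(x,z)\le A(x,y)+A(y,z)$ (no symmetry). A filter on $A$ is a nonempty set of nonempty subsets closed under finite intersections and supersets. $\mathcal F$ is weakly flat iff for every $\epsilon>0$ there is $f\in\mathcal F$ such that for all $x\in f$ and all $g\in\mathcal F$ there is $y\in g$ with $A(x,y)\le\epsilon$; $\mathcal F$ is flat iff for every $\epsilon>0$ there is $f\in\mathcal F$ such that for every finite family $x_1,\dots,x_n\in f$ and every $g\in\mathcal F$ there is $y\in g$ with $A(x_i,y)\le\epsilon$ for all $i$. For weakly flat filters, $\mathcal F_1\to\mathcal F_2$ iff for every $\epsilon>0$ there is $f\in\mathcal F_1$ such that for every $x\in f$ and every $g\in\mathcal F_2$ there is $y\in g$ with $A(x,y)\le\epsilon$; this is a preorder. The filter of a sequence $(x_n)$ is generated by the tails $\{x_p:p\ge n\}$; $(x_n)$ is forward Cauchy iff for every $\epsilon>0$ there is $N$ with $A(x_n,x_m)\le\epsilon$ whenever $m\ge n\ge N$ (such filters are flat). *)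

(* Defs.v *)
(* distances take values in [0,+oo] = Coquelicot's Rbar. *)
From Stdlib Require Import Reals.
From Coquelicot Require Import Rbar.
Open Scope R_scope.

Definition gen_metric {A : Type} (d : A -> A -> Rbar) : Prop :=
  (forall x y, Rbar_le (Finite 0) (d x y)) /\
  (forall x, d x x = Finite 0) /\
  (forall x y z, Rbar_le (d x z) (Rbar_plus (d x y) (d y z))).

Definition is_filter {A : Type} (F : (A -> Prop) -> Prop) : Prop :=
  (exists f, F f) /\
  (forall f, F f -> exists x, f x) /\
  (forall f g, F f -> F g -> F (fun x => f x /\ g x)) /\
  (forall f g, F f -> (forall x, f x -> g x) -> F g).

Definition weakly_flat {A : Type} (d : A -> A -> Rbar)
  (F : (A -> Prop) -> Prop) : Prop :=
  forall eps : R, 0 < eps ->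
    exists f, F f /\
      forall x, f x -> forall g, F g -> exists y, g y /\ Rbar_le (d x y) (Finite eps).

Definition flat {A : Type} (d : A -> A -> Rbar)
  (F : (A -> Prop) -> Prop) : Prop :=
  forall eps : R, 0 < eps ->
    exists f, F f /\
      forall (xs : list A), (forall x, List.In x xs -> f x) ->
      forall g, F g -> exists y, g y /\
        forall x, List.In x xs -> Rbar_le (d x y) (Finite eps).

Definition arrow {A : Type} (d : A -> A -> Rbar)
  (F1 F2 : (A -> Prop) -> Prop) : Prop :=
  forall eps : R, 0 < eps ->
    exists f, F1 f /\
      forall x, f x -> forall g, F2 g -> exists y, g y /\ Rbar_le (d x y) (Finite eps).

Definition wfil {A : Type} (d : A -> A -> Rbar) (F : (A -> Prop) -> Prop) : Prop :=
  is_filter F /\ weakly_flat d F.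

Definition wfil_lub {A : Type} (d : A -> A -> Rbar) {I : Type}
  (Fs : I -> (A -> Prop) -> Prop) (G : (A -> Prop) -> Prop) : Prop :=
  wfil d G /\
  (forall i, arrow d (Fs i) G) /\
  (forall H, wfil d H -> (forall i, arrow d (Fs i) H) -> arrow d G H).

Definition seq_filter {A : Type} (x : nat -> A) : (A -> Prop) -> Prop :=
  fun P => exists n, forall p, (n <= p)%nat -> P (x p).

Definition forward_cauchy {A : Type} (d : A -> A -> Rbar) (x : nat -> A) : Prop :=
  forall eps : R, 0 < eps -> exists N, forall n m, (N <= n)%nat -> (n <= m)%nat ->
    Rbar_le (d (x n) (x m)) (Finite eps).

(* Main.v *)
Require Import Defs.
From Stdlib Require Import Reals Lra Lia Classical ClassicalEpsilon List.
From Coquelicot Require Import Rbar.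
Open Scope R_scope.

Lemma tri {A} (d : A -> A -> Rbar) (Hd : gen_metric d) x y z a b :
  Rbar_le (d x y) (Finite a) -> Rbar_le (d y z) (Finite b) ->
  Rbar_le (d x z) (Finite (a + b)).
Proof.
  intros H1 H2. destruct Hd as (_ & _ & Ht).
  eapply Rbar_le_trans; [apply (Ht x y z)|].
  exact (Rbar_plus_le_compat _ _ _ _ H1 H2).
Qed.

Lemma small_pow eps : 0 < eps -> exists K, forall n, (K <= n)%nat -> (/2)^n < eps.
Proof.
  intros He.
  destruct (pow_lt_1_zero (/2) ltac:(rewrite Rabs_pos_eq; lra) eps He) as [N HN].
  exists N. intros n Hn. specialize (HN n Hn).
  rewrite Rabs_pos_eq in HN; [exact HN| apply pow_le; lra].
Qed.

Lemma seq_filter_filter {A} (x : nat -> A) : is_filter (seq_filter x).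
Proof.
  unfold is_filter, seq_filter. split; [|split; [|split]].
  - exists (fun _ => True). exists 0%nat. auto.
  - intros f [n Hn]. exists (x n). apply Hn. lia.
  - intros f g [n Hn] [m Hm]. exists (Nat.max n m). intros p Hp. split; [apply Hn|apply Hm]; lia.
  - intros f g [n Hn] Hfg. exists n. intros p Hp. apply Hfg, Hn, Hp.
Qed.

Lemma cauchy_wf {A} d (x : nat -> A) : forward_cauchy d x -> weakly_flat d (seq_filter x).
Proof.
  intros Hc eps He. destruct (Hc eps He) as [N HN].
  exists (fun z => exists p, (N <= p)%nat /\ z = x p). split.
  - exists N. intros p Hp. eauto.
  - intros z [p [Hp ->]] g [m Hm]. exists (x (Nat.max p m)). split.
    + apply Hm; lia.
    + apply HN; lia.
Qed.

Definition inter {A I} (Fs : I -> (A -> Prop) -> Prop) : (A -> Prop) -> Prop :=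
  fun g => forall i, Fs i g.

Lemma inter_lub {A} d {I} (Fs : I -> (A->Prop)->Prop) :
  inhabited I -> (forall i, wfil d (Fs i)) -> wfil_lub d Fs (inter Fs).
Proof.
  intros [i0] HF. unfold wfil_lub, wfil.
  split; [split|split].
  - unfold is_filter, inter. split; [|split; [|split]].
    + exists (fun _ => True). intros i. destruct (HF i) as [[[f Hf] [_ [_ Hsup]]] _].
      apply (Hsup f); auto.
    + intros f Hf. destruct (HF i0) as [[_ [Hne _]] _]. apply Hne, Hf.
    + intros f g Hf Hg i. destruct (HF i) as [[_ [_ [Hint _]]] _]. apply Hint; auto.
    + intros f g Hf Hfg i. destruct (HF i) as [[_ [_ [_ Hsup]]] _]. apply (Hsup f); auto.
  - intros eps He.
    exists (fun x => exists i f, Fs i f /\ (forall x, f x -> forall g, Fs i g -> exists y, g y /\ Rbar_le (d x y) (Finite eps)) /\ f x).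
    split.
    + intros i. destruct (HF i) as [[_ [_ [_ Hsup]]] Hw]. destruct (Hw eps He) as [f [Hf Hfp]].
      apply (Hsup f); auto. intros x Hx. exists i, f. auto.
    + intros x [i [f [Hf [Hfp Hx]]]] g Hg. apply (Hfp x Hx g (Hg i)).
  - intros i eps He. destruct (HF i) as [_ Hw]. destruct (Hw eps He) as [f [Hf Hfp]].
    exists f. split; [exact Hf|]. intros x Hx g Hg. apply (Hfp x Hx g (Hg i)).
  - intros H _ HiH eps He.
    exists (fun x => exists i f, Fs i f /\ (forall x, f x -> forall g, H g -> exists y, g y /\ Rbar_le (d x y) (Finite eps)) /\ f x).
    split.
    + intros i. destruct (HF i) as [[_ [_ [_ Hsup]]] _]. destruct (HiH i eps He) as [f [Hf Hfp]].
      apply (Hsup f); auto. intros x Hx. exists i, f. auto.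
    + intros x [i [f [Hf [Hfp Hx]]]] g Hg. apply (Hfp x Hx g Hg).
Qed.

Lemma arrow_trans {A} d (Hd : gen_metric d) (F1 F2 F3 : (A->Prop)->Prop) :
  arrow d F1 F2 -> arrow d F2 F3 -> arrow d F1 F3.
Proof.
  intros H12 H23 eps He.
  destruct (H12 (eps/2) ltac:(lra)) as [f1 [Hf1 P1]].
  destruct (H23 (eps/2) ltac:(lra)) as [f2 [Hf2 P2]].
  exists f1. split; auto. intros x Hx g Hg.
  destruct (P1 x Hx f2 Hf2) as [y [Hy Dy]].
  destruct (P2 y Hy g Hg) as [z [Hz Dz]].
  exists z. split; auto. replace eps with (eps/2+eps/2) by lra. eapply (tri d Hd); eauto.
Qed.

Lemma lub_approx {A} d (Hd : gen_metric d) (F : (A->Prop)->Prop) {J} (s : J -> nat -> A) :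
  wfil d F -> (forall j, arrow d (seq_filter (s j)) F) ->
  (forall eps, 0 < eps -> exists f, F f /\ forall x, f x -> exists j N, forall n, (N <= n)%nat -> Rbar_le (d x (s j n)) (Finite eps)) ->
  wfil_lub d (fun j => seq_filter (s j)) F.
Proof.
  intros HF Har Hap. split; [exact HF|split; [exact Har|]].
  intros H _ HjH eps He.
  destruct (Hap (eps/2) ltac:(lra)) as [f [Hf Pf]].
  exists f. split; auto. intros x Hx h Hh.
  destruct (Pf x Hx) as [j [N HN]].
  destruct (HjH j (eps/2) ltac:(lra)) as [P [[n0 Hn0] PP]].
  destruct (PP (s j (Nat.max N n0)) (Hn0 (Nat.max N n0) ltac:(lia)) h Hh) as [y [Hy Dy]].
  exists y. split; auto. replace eps with (eps/2+eps/2) by lra.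
  eapply (tri d Hd); [|exact Dy]. apply HN; lia.
Qed.

Definition e (n : nat) : R := (/2)^(S n).
Definition chain {A} (d : A -> A -> Rbar) (fs : nat -> A -> Prop) (x : nat -> A) : Prop :=
  forall n, fs n (x n) /\ Rbar_le (d (x n) (x (S n))) (Finite (e n)).

Lemma e_pos n : 0 < e n. Proof. unfold e. apply pow_lt; lra. Qed.

Lemma chain_bound {A} d (Hd : gen_metric d) fs (x : nat -> A) : chain d fs x ->
  forall n m, Rbar_le (d (x n) (x (n + m)%nat)) (Finite ((/2)^n - (/2)^(n+m))).
Proof.
  intros Hc n m. induction m.
  - rewrite Nat.add_0_r. replace ((/2)^n - (/2)^n) with 0 by ring.
    destruct Hd as (_ & Hz & _). rewrite Hz. simpl; lra.
  - replace ((/2)^n - (/2)^(n + S m)) with (((/2)^n - (/2)^(n+m)) + e (n+m)).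
    + rewrite <- plus_n_Sm. eapply (tri d Hd); eauto. apply Hc.
    + unfold e. rewrite <- plus_n_Sm. simpl. field.
Qed.

Lemma chain_cauchy {A} d (Hd : gen_metric d) fs (x : nat -> A) : chain d fs x -> forward_cauchy d x.
Proof.
  intros Hc eps He. destruct (small_pow eps He) as [K HK].
  exists K. intros n m Hn Hm.
  pose proof (chain_bound d Hd fs x Hc n (m - n)) as HB.
  replace (n + (m - n))%nat with m in HB by lia.
  eapply Rbar_le_trans; [exact HB|].
  simpl. pose proof (HK n Hn). assert (0 < (/2)^m) by (apply pow_lt; lra). lra.
Qed.

Lemma chain_to_F {A} d (F : (A->Prop)->Prop) fs (x : nat -> A) :
  (forall n z, fs n z -> forall g, F g -> exists y, g y /\ Rbar_le (d z y) (Finite (e n))) ->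
  chain d fs x -> arrow d (seq_filter x) F.
Proof.
  intros Hw Hc eps He. destruct (small_pow eps He) as [K HK].
  exists (fun z => exists p, (K <= p)%nat /\ z = x p). split.
  - exists K. intros p Hp. eauto.
  - intros z [p [Hp ->]] g Hg. destruct (Hw p (x p) (proj1 (Hc p)) g Hg) as [y [Hy Dy]].
    exists y. split; auto. eapply Rbar_le_trans; [exact Dy|]. unfold e.
    pose proof (HK (S p) ltac:(lia)). simpl in *. lra.
Qed.

Fixpoint fsr {A} (ff : nat -> A -> Prop) (n : nat) : A -> Prop :=
  match n with 0 => ff 0%nat | S m => fun x => fsr ff m x /\ ff (S m) x end.

Lemma make_fs {A} (F : (A->Prop)->Prop) (HF : is_filter F) (P : nat -> (A -> Prop) -> Prop) :
  (forall n f g, P n f -> (forall x, g x -> f x) -> P n g) ->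
  (forall n, exists f, F f /\ P n f) ->
  exists fs : nat -> A -> Prop, (forall n, F (fs n)) /\
    (forall n k x, (k <= n)%nat -> fs n x -> fs k x) /\ (forall n, P n (fs n)).
Proof.
  intros Pm Hex.
  pose (ff := fun n => proj1_sig (constructive_indefinite_description _ (Hex n))).
  assert (Hff : forall n, F (ff n) /\ P n (ff n))
    by (intro n; exact (proj2_sig (constructive_indefinite_description _ (Hex n)))).
  exists (fsr ff). destruct HF as (_ & _ & Hint & _). split; [|split].
  - induction n; simpl. apply Hff. apply Hint; auto. apply Hff.
  - intros n k x Hkn. induction Hkn; auto. simpl. intros [H _]; auto.
  - intros n. apply (Pm n (ff n)). apply Hff. destruct n; simpl; [auto| intros x [_ H]; exact H].
Qed.

Fixpoint build {A} (nx : nat -> A -> A) (K : nat) (x : A) (n : nat) : A :=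
  match n with 0 => x | S m => if Nat.ltb m K then x else nx m (build nx K x m) end.

Lemma chain_approx {A} d (Hd : gen_metric d) (F : (A->Prop)->Prop) fs :
  (forall n, F (fs n)) -> (forall n k x, (k <= n)%nat -> fs n x -> fs k x) ->
  (forall n z, fs n z -> forall g, F g -> exists y, g y /\ Rbar_le (d z y) (Finite (e n))) ->
  forall eps, 0 < eps -> exists f, F f /\ forall x, f x -> exists b N, chain d fs b /\
     forall n, (N <= n)%nat -> Rbar_le (d x (b n)) (Finite eps).
Proof.
  intros HF Hdec Hw eps He.
  assert (Hc : forall n z, exists y, fs n z -> fs (S n) y /\ Rbar_le (d z y) (Finite (e n))).
  { intros n z. destruct (classic (fs n z)) as [Hz|Hz].
    - destruct (Hw n z Hz (fs (S n)) (HF (S n))) as [y Hy]. exists y. auto.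
    - exists z. intros H; contradiction. }
  pose (nx := fun n z => proj1_sig (constructive_indefinite_description _ (Hc n z))).
  assert (Hnx : forall n z, fs n z -> fs (S n) (nx n z) /\ Rbar_le (d z (nx n z)) (Finite (e n))).
  { intros n z. exact (proj2_sig (constructive_indefinite_description _ (Hc n z))). }
  destruct (small_pow eps He) as [K HK].
  exists (fs K). split; [apply HF|].
  intros x Hx. exists (build nx K x), K.
  assert (Hb1 : forall n, (n <= K)%nat -> build nx K x n = x).
  { induction n; intros Hn; simpl; auto. destruct (Nat.ltb n K) eqn:E; auto.
    apply Nat.ltb_ge in E. exfalso; lia. }
  assert (Hb2 : forall n, fs n (build nx K x n)).
  { induction n; simpl.
    - apply (Hdec K 0%nat); auto; lia.
    - destruct (Nat.ltb n K) eqn:E.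
      + apply Nat.ltb_lt in E. apply (Hdec K); auto; lia.
      + apply Hnx, IHn. }
  assert (Hch : chain d fs (build nx K x)).
  { intros n. split; auto. simpl. destruct (Nat.ltb n K) eqn:E.
    - apply Nat.ltb_lt in E. rewrite Hb1 by lia. destruct Hd as (_ & Hz & _). rewrite Hz.
      simpl. left; apply e_pos.
    - apply Hnx, Hb2. }
  split; auto. intros n Hn.
  pose proof (chain_bound d Hd fs _ Hch K (n - K)) as HB.
  rewrite Hb1 in HB by lia. replace (K + (n - K))%nat with n in HB by lia.
  eapply Rbar_le_trans; [exact HB|].
  simpl. pose proof (HK K (le_n K)). assert (0 < (/2)^n) by (apply pow_lt; lra). lra.
Qed.

Fixpoint jseq {A} (nx3 : nat -> A -> A -> A -> A) (s t : nat -> A) (n : nat) : A :=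
  match n with 0 => s 0%nat | S m => nx3 m (s m) (t m) (jseq nx3 s t m) end.

Lemma arrow_of_close {A} d (Hd : gen_metric d) fs (s u : nat -> A) : chain d fs u ->
  (forall p, Rbar_le (d (s p) (u (S p))) (Finite (e p))) ->
  arrow d (seq_filter s) (seq_filter u).
Proof.
  intros Hu Hsu eps He. destruct (small_pow eps He) as [K HK].
  exists (fun z => exists p, (K <= p)%nat /\ z = s p). split.
  - exists K. intros p Hp. eauto.
  - intros z [p [Hp ->]] g [m Hm]. exists (u (S p + m)%nat). split; [apply Hm; lia|].
    pose proof (chain_bound d Hd fs u Hu (S p) m) as HB.
    eapply Rbar_le_trans; [exact (tri d Hd _ _ _ _ _ (Hsu p) HB)|].
    pose proof (HK p Hp). assert (0 < (/2)^(p + m)) by (apply pow_lt; lra).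
    unfold e. simpl. lra.
Qed.

Lemma chain_join {A} d (Hd : gen_metric d) (F : (A->Prop)->Prop) fs :
  (forall n, F (fs n)) ->
  (forall n, forall xs : list A, (forall x, In x xs -> fs n x) -> forall g, F g ->
     exists y, g y /\ forall x, In x xs -> Rbar_le (d x y) (Finite (e n))) ->
  forall s t, chain d fs s -> chain d fs t -> exists u, chain d fs u /\
    arrow d (seq_filter s) (seq_filter u) /\ arrow d (seq_filter t) (seq_filter u).
Proof.
  intros HF Hfl s t Hs Ht.
  assert (Hc : forall n a b c, exists y, (fs n a /\ fs n b /\ fs n c) -> fs (S n) y /\
     Rbar_le (d a y) (Finite (e n)) /\ Rbar_le (d b y) (Finite (e n)) /\ Rbar_le (d c y) (Finite (e n))).
  { intros n a b c. destruct (classic (fs n a /\ fs n b /\ fs n c)) as [Hz|Hz].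
    - destruct Hz as (Ha & Hb & Hcc).
      destruct (Hfl n (a :: b :: c :: nil) ltac:(intros x [<-|[<-|[<-|[]]]]; auto) (fs (S n)) (HF (S n)))
        as [y [Hy Hd']].
      exists y. intros _. repeat split; auto; apply Hd'; simpl; auto.
    - exists a. intros H; contradiction. }
  pose (nx := fun n a b c => proj1_sig (constructive_indefinite_description _ (Hc n a b c))).
  assert (Hnx : forall n a b c, (fs n a /\ fs n b /\ fs n c) -> fs (S n) (nx n a b c) /\
     Rbar_le (d a (nx n a b c)) (Finite (e n)) /\ Rbar_le (d b (nx n a b c)) (Finite (e n)) /\
     Rbar_le (d c (nx n a b c)) (Finite (e n))).
  { intros n a b c. exact (proj2_sig (constructive_indefinite_description _ (Hc n a b c))). }
  assert (Hu1 : forall n, fs n (jseq nx s t n)).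
  { induction n; simpl. apply Hs.
    destruct (Hnx n (s n) (t n) (jseq nx s t n)) as (H1 & _);
      [split; [apply Hs|split; [apply Ht|exact IHn]]|exact H1]. }
  assert (Hall : forall n, fs n (s n) /\ fs n (t n) /\ fs n (jseq nx s t n)).
  { intros n. split; [apply Hs|split; [apply Ht|apply Hu1]]. }
  assert (Hu : chain d fs (jseq nx s t)).
  { intros n. split; [apply Hu1|]. simpl.
    destruct (Hnx n (s n) (t n) (jseq nx s t n) (Hall n)) as (_ & _ & _ & H4). exact H4. }
  exists (jseq nx s t). split; auto. split.
  - apply (arrow_of_close d Hd fs); auto. intros p. simpl.
    destruct (Hnx p (s p) (t p) (jseq nx s t p) (Hall p)) as (_ & H2 & _). exact H2.
  - apply (arrow_of_close d Hd fs); auto. intros p. simpl.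
    destruct (Hnx p (s p) (t p) (jseq nx s t p) (Hall p)) as (_ & _ & H3 & _). exact H3.
Qed.

Lemma flat_of_lub {A} d (Hd : gen_metric d) (F : (A->Prop)->Prop) {I} (s : I -> nat -> A) :
  inhabited I -> (forall i, forward_cauchy d (s i)) ->
  (forall i j, exists k, arrow d (seq_filter (s i)) (seq_filter (s k)) /\
                         arrow d (seq_filter (s j)) (seq_filter (s k))) ->
  wfil_lub d (fun i => seq_filter (s i)) F -> flat d F.
Proof.
  intros [i0] Hcs Hdir [HF [HsF Hlub]].
  assert (HG : wfil_lub d (fun i => seq_filter (s i)) (inter (fun i => seq_filter (s i)))).
  { apply inter_lub; [constructor; exact i0|]. intros i.
    split; [apply seq_filter_filter|apply cauchy_wf, Hcs]. }
  destruct HG as [HGw [HsG _]].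
  pose proof (Hlub _ HGw HsG) as HFG.
  intros eps He. set (dl := eps/5). assert (Hdl : 0 < dl) by (unfold dl; lra).
  destruct (HFG dl Hdl) as [f0 [Hf0 P0]].
  exists f0. split; auto.
  pose (good := fun y => exists i N, (forall n m, (N <= n)%nat -> (n <= m)%nat ->
     Rbar_le (d (s i n) (s i m)) (Finite dl)) /\ exists p, (N <= p)%nat /\ y = s i p).
  assert (Hgood : inter (fun i => seq_filter (s i)) good).
  { intros i. destruct (Hcs i dl Hdl) as [N HN]. exists N. intros p Hp. exists i, N.
    split; auto. exists p; auto. }
  assert (Hclose : forall x, f0 x -> exists i N, (forall n m, (N <= n)%nat -> (n <= m)%nat ->
     Rbar_le (d (s i n) (s i m)) (Finite dl)) /\ exists p, (N <= p)%nat /\ Rbar_le (d x (s i p)) (Finite dl)).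
  { intros x Hx. destruct (P0 x Hx good Hgood) as [y [[i [N [HN [p [Hp ->]]]]] Dy]].
    exists i, N. split; auto. exists p; auto. }
  intros xs Hxs g Hg.
  assert (C1 : exists k, forall x, In x xs -> exists i N, (forall n m, (N <= n)%nat -> (n <= m)%nat ->
     Rbar_le (d (s i n) (s i m)) (Finite dl)) /\ (exists p, (N <= p)%nat /\ Rbar_le (d x (s i p)) (Finite dl))
     /\ arrow d (seq_filter (s i)) (seq_filter (s k))).
  { clear Hg. induction xs as [|x xs IH].
    - exists i0. intros x [].
    - destruct (IH (fun z Hz => Hxs z (or_intror Hz))) as [k Hk].
      destruct (Hclose x (Hxs x (or_introl eq_refl))) as [i [N [HN Hp]]].
      destruct (Hdir i k) as [k' [Hik' Hkk']].
      exists k'. intros z [<-|Hz].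
      + exists i, N. auto.
      + destruct (Hk z Hz) as [i1 [N1 [HN1 [Hp1 Ha1]]]]. exists i1, N1. split; auto.
        split; auto. eapply (arrow_trans d Hd); eauto. }
  destruct C1 as [k Hk].
  destruct (Hcs k dl Hdl) as [Nk HNk].
  assert (Hgk : seq_filter (s k) (fun y => exists r, (Nk <= r)%nat /\ y = s k r)).
  { exists Nk. intros r Hr. exists r; auto. }
  assert (C2 : forall x, In x xs -> exists R, forall r, (R <= r)%nat ->
      Rbar_le (d x (s k r)) (Finite (dl + dl + dl + dl))).
  { intros x Hx. destruct (Hk x Hx) as [i [N [HN [[p [Hp Dp]] Ha]]]].
    destruct (Ha dl Hdl) as [P [[M HM] PP]].
    destruct (PP (s i (p + M)%nat) (HM (p + M)%nat ltac:(lia)) _ Hgk) as [y [[r' [Hr' ->]] Dy]].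
    exists r'. intros r Hr.
    apply (tri d Hd _ (s k r') _ (dl+dl+dl) dl); [|apply HNk; lia].
    apply (tri d Hd _ (s i (p+M)%nat) _ (dl+dl) dl); [|exact Dy].
    apply (tri d Hd _ (s i p) _ dl dl); [exact Dp|apply HN; lia]. }
  assert (C3 : exists R, forall r, (R <= r)%nat -> forall x, In x xs ->
      Rbar_le (d x (s k r)) (Finite (dl + dl + dl + dl))).
  { clear Hk Hxs Hg. induction xs as [|x xs IH].
    - exists 0%nat. intros r _ x [].
    - destruct (IH (fun z Hz => C2 z (or_intror Hz))) as [R HR].
      destruct (C2 x (or_introl eq_refl)) as [R1 HR1].
      exists (Nat.max R R1). intros r Hr z [<-|Hz].
      + apply HR1; lia.
      + apply HR; auto; lia. }
  destruct C3 as [R HR].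
  destruct (HsF k dl Hdl) as [P [[M HM] PP]].
  destruct (PP (s k (R + M)%nat) (HM (R + M)%nat ltac:(lia)) g Hg) as [y [Hy Dy]].
  exists y. split; auto. intros x Hx.
  replace eps with (dl + dl + dl + dl + dl) by (unfold dl; lra).
  apply (tri d Hd _ (s k (R + M)%nat) _ (dl+dl+dl+dl) dl); [apply HR; [lia|exact Hx]|exact Dy].
Qed.

Theorem mainTheorem12 (A : Type) (d : A -> A -> Rbar) (Hd : gen_metric d) :
  (* (a) nonempty families in WFil*(A) have least upper bounds *)
  (forall (I : Type) (Fs : I -> (A -> Prop) -> Prop),
     inhabited I -> (forall i, wfil d (Fs i)) ->
     exists G, wfil_lub d Fs G) /\
  (* (b) density of forward Cauchy sequences *)
  (forall F, wfil d F ->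
     wfil_lub d
       (fun s : {x : nat -> A | forward_cauchy d x /\ arrow d (seq_filter x) F} =>
          seq_filter (proj1_sig s))
       F) /\
  (* (c) flat filters = lubs of nonempty directed families of forward Cauchy sequences *)
  (forall F, wfil d F ->
     (flat d F <->
      exists (I : Type) (s : I -> nat -> A),
        inhabited I /\
        (forall i, forward_cauchy d (s i)) /\
        (forall i j, exists k, arrow d (seq_filter (s i)) (seq_filter (s k)) /\
                               arrow d (seq_filter (s j)) (seq_filter (s k))) /\
        wfil_lub d (fun i => seq_filter (s i)) F)).
Proof.
  split; [|split].
  - intros I Fs HI HF. exists (inter Fs). apply inter_lub; auto.
  - intros F HF. pose proof HF as [HFf HFw].
    destruct (make_fs F HFf (fun n f => forall z, f z -> forall g, F g ->
        exists y, g y /\ Rbar_le (d z y) (Finite (e n)))) as [fs [HFs [Hdec Hw]]].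
    + intros n f g Hf Hgf z Hz. apply Hf, Hgf, Hz.
    + intros n. exact (HFw (e n) (e_pos n)).
    + apply (lub_approx d Hd F (fun j : {x : nat -> A | forward_cauchy d x /\ arrow d (seq_filter x) F} => proj1_sig j)); auto.
      * intros j. exact (proj2 (proj2_sig j)).
      * intros eps He. destruct (chain_approx d Hd F fs HFs Hdec Hw eps He) as [f [Hf Pf]].
        exists f. split; auto. intros x Hx. destruct (Pf x Hx) as [b [N [Hb HbN]]].
        exists (exist _ b (conj (chain_cauchy d Hd fs b Hb) (chain_to_F d F fs b Hw Hb))), N.
        exact HbN.
  - intros F HF. pose proof HF as [HFf HFw]. split.
    + intros Hfl.
      destruct (make_fs F HFf (fun n f => forall xs : list A, (forall x, In x xs -> f x) ->
          forall g, F g -> exists y, g y /\ forall x, In x xs -> Rbar_le (d x y) (Finite (e n))))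
        as [fs [HFs [Hdec Hfs]]].
      * intros n f g Hf Hgf xs Hxs. apply Hf. intros x Hx. apply Hgf, Hxs, Hx.
      * intros n. exact (Hfl (e n) (e_pos n)).
      * assert (Hw : forall n z, fs n z -> forall g, F g -> exists y, g y /\ Rbar_le (d z y) (Finite (e n))).
        { intros n z Hz g Hg.
          destruct (Hfs n (z :: nil) ltac:(intros x [<-|[]]; exact Hz) g Hg) as [y [Hy Dy]].
          exists y. split; auto. apply Dy. left; reflexivity. }
        exists {x : nat -> A | chain d fs x}, (fun j => proj1_sig j).
        destruct (chain_approx d Hd F fs HFs Hdec Hw 1 ltac:(lra)) as [f [Hf Pf]].
        destruct HFf as (_ & Hne & _). destruct (Hne f Hf) as [x0 Hx0].
        destruct (Pf x0 Hx0) as [b0 [_ [Hb0 _]]].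
        split; [constructor; exact (exist _ b0 Hb0)|].
        split; [intros j; exact (chain_cauchy d Hd fs _ (proj2_sig j))|].
        split.
        { intros [s1 Hs1] [t1 Ht1].
          destruct (chain_join d Hd F fs HFs Hfs s1 t1 Hs1 Ht1) as [u [Hu [Hsu Htu]]].
          exists (exist _ u Hu). simpl. auto. }
        apply (lub_approx d Hd F (fun j : {x : nat -> A | chain d fs x} => proj1_sig j)); auto.
        { intros j. exact (chain_to_F d F fs _ Hw (proj2_sig j)). }
        intros eps He. destruct (chain_approx d Hd F fs HFs Hdec Hw eps He) as [f' [Hf' Pf']].
        exists f'. split; auto. intros x Hx. destruct (Pf' x Hx) as [b [N [Hb HbN]]].
        exists (exist _ b Hb), N. exact HbN.
    + intros [I [s [HI [Hcs [Hdir Hl]]]]]. exact (flat_of_lub d Hd F s HI Hcs Hdir Hl).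
Qed.
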